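(* Let $a_1,a_2,b_1,b_2>0$ be integers, and let $m_1,m_2,n_1,n_2$ be positive integers such that $m_1+m_2>a_1+a_2$, $n_1+n_2>b_1+b_2$, $m_1-m_2=a_1-a_2$, $n_1-n_2=b_1-b_2$ and $\frac{n_1+n_2}{m_1+m_2}=\frac{b_1+b_2}{a_1+a_2}$. Then there exists a $(0,1)$ matrix $Y$ of size $(m_1+m_2)\times(n_1+n_2)$ such that $$Y\begin{bmatrix}\mathbf 1_{n_1}\\-\mathbf 1_{n_2}\end{bmatrix}=\begin{bmatrix}b_1\mathbf 1_{m_1}\\-b_2\mathbf 1_{m_2}\end{bmatrix},\qquad Y^T\begin{bmatrix}\mathbf 1_{m_1}\\-\mathbf 1_{m_2}\end{bmatrix}=\begin{bmatrix}a_1\mathbf 1_{n_1}\\-a_2\mathbf 1_{n_2}\end{bmatrix}.$$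
   Context: $\mathbf 1_p$ denotes the all-ones column vector of length $p$. *)

(* Defs.v *)
From mathcomp Require Import all_boot all_order all_algebra.
Set Implicit Arguments. Unset Strict Implicit. Unset Printing Implicit Defensive.
Import Order.TTheory GRing.Theory Num.Theory.
Local Open Scope ring_scope.

Definition zero_one_mx (m n : nat) (Y : 'M[int]_(m, n)) : Prop :=
  forall i j, Y i j = 0 \/ Y i j = 1.

Definition signed_ones (p q : nat) (c1 c2 : int) : 'cV[int]_(p + q) :=
  col_mx (const_mx c1) (const_mx (- c2)).

(* Main.v *)
Require Import Defs.
From mathcomp Require Import all_boot all_order all_algebra.
From mathcomp Require Import zify ring lra.
Set Implicit Arguments. Unset Strict Implicit. Unset Printing Implicit Defensive.
Import Order.TTheory GRing.Theory Num.Theory.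
Definition zf (r N i j : nat) : nat := \sum_(k < r) (((i * r + k) %% N) == j).

Lemma sum_ind1 (N x : nat) : (0 < N)%N ->
  \sum_(j < N) (x %% N == j : nat) = 1%N.
Proof.
move=> N0.
rewrite (bigD1 (Ordinal (ltn_pmod x N0))) //= eqxx big1 // => j.
by rewrite -val_eqE /= eq_sym => /negbTE ->.
Qed.

Lemma zf_row r N i : (0 < N)%N -> \sum_(j < N) zf r N i j = r.
Proof.
move=> N0; rewrite /zf exchange_big /=.
under eq_bigr do rewrite sum_ind1 //.
by rewrite sum1_card card_ord.
Qed.

Lemma zf_le1 r N i j : (r <= N)%N -> (zf r N i j <= 1)%N.
Proof.
move=> rN; rewrite /zf.
case: (pickP (fun k : 'I_r => (i * r + k) %% N == j)) => [k1 Hk1|none].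
  rewrite (bigD1 k1) //= Hk1 big1 // => k Hk.
  apply/eqP; rewrite eqb0; apply: contra Hk => Hk.
  rewrite -val_eqE /=; move: Hk; rewrite -(eqP Hk1) eqn_modDl.
  by rewrite !modn_small // (leq_trans (ltn_ord _) rN).
by rewrite big1 // => k _; rewrite none.
Qed.

Lemma sum_blocks (F : nat -> nat) r M :
  \sum_(i < M) \sum_(k < r) F (i * r + k)%N = \sum_(t < M * r) F t.
Proof.
elim: M => [|M IH]; first by rewrite !big_ord0.
rewrite big_ord_recr /= IH mulSnr -!(big_mkord xpredT).
rewrite (@big_cat_nat _ _ _ (M * r) 0 (M * r + r)) //=; last by lia.
congr (_ + _).
have := @big_addn _ _ addn 0 (M * r + r) (M * r) xpredT F.
rewrite add0n addKn => ->; rewrite big_mkord.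
by apply: eq_bigr => i _; rewrite addnC.
Qed.

Lemma sum_modcount N c j : (j < N)%N ->
  \sum_(t < c * N) (t %% N == j : nat) = c.
Proof.
move=> jN.
elim: c => [|c IH]; first by rewrite big_ord0.
rewrite mulSnr -(big_mkord xpredT (fun t => (t %% N == j : nat))).
rewrite (@big_cat_nat _ _ _ (c * N) 0 (c * N + N)) //=; last by lia.
rewrite big_mkord IH.
have := @big_addn _ _ addn 0 (c * N + N) (c * N) xpredT (fun t => (t %% N == j : nat)).
rewrite add0n addKn => ->.
rewrite big_mkord.
have -> : \sum_(i < N) ((i + c * N) %% N == j : nat) = \sum_(i < N) (i == Ordinal jN : nat).
  by apply: eq_bigr => i _; rewrite addnC modnMDl modn_small.
rewrite (bigD1 (Ordinal jN)) //= eqxx big1 ?addn0 ?addn1 // => i /negbTE -> //.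
Qed.

Lemma zf_col r N M c j : (j < N)%N -> (M * r = c * N)%N ->
  \sum_(i < M) zf r N i j = c.
Proof.
move=> jN H; rewrite /zf (sum_blocks (fun t => (t %% N == j : nat))) H.
exact: sum_modcount.
Qed.
Local Open Scope ring_scope.

Definition flipmx m1 m2 n1 n2 (Z : 'M[int]_(m1 + m2, n1 + n2)) :=
  block_mx (ulsubmx Z) (const_mx 1 - ursubmx Z) (const_mx 1 - dlsubmx Z) (drsubmx Z).

Lemma flip_tr m1 m2 n1 n2 (Z : 'M[int]_(m1 + m2, n1 + n2)) :
  (flipmx Z)^T = flipmx Z^T.
Proof.
by rewrite /flipmx tr_block_mx !linearB /= trmx_ulsub trmx_drsub trmx_ursub trmx_dlsub !trmx_const.
Qed.

Lemma ok01 (x : int) : x = 0 \/ x = 1 -> (x = 0 \/ x = 1) /\ ((1 - x) = 0 \/ (1 - x) = 1).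
Proof. by case=> ->; split; [left|right|right|left]. Qed.

Lemma flip01 m1 m2 n1 n2 (Z : 'M[int]_(m1 + m2, n1 + n2)) :
  zero_one_mx Z -> zero_one_mx (flipmx Z).
Proof.
move=> HZ i j; rewrite /flipmx /block_mx /= !mxE.
case: (split i) => i'; rewrite !mxE; case: (split j) => j'; rewrite !mxE;
  first [exact: (ok01 (HZ _ _)).1 | exact: (ok01 (HZ _ _)).2].
Qed.

Lemma flip_row m1 m2 n1 n2 (Z : 'M[int]_(m1 + m2, n1 + n2)) (r b1 b2 : int) :
  (forall i, \sum_j Z i j = r) -> r = b1 + n2%:R -> r = b2 + n1%:R ->
  flipmx Z *m signed_ones n1 n2 1 1 = signed_ones m1 m2 b1 b2.
Proof.
move=> Hr E1 E2.
rewrite /flipmx /signed_ones mul_block_col; congr col_mx; apply/matrixP => i k; rewrite !mxE.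
  have := Hr (lshift m2 i); rewrite big_split_ord /= => H.
  under eq_bigr do rewrite !mxE.
  under [X in _ + X]eq_bigr do rewrite !mxE.
  under eq_bigr do rewrite mulr1.
  under [X in _ + X]eq_bigr do rewrite mulrN1 opprB.
  rewrite sumrB sumr_const card_ord; lra.
have := Hr (rshift m1 i); rewrite big_split_ord /= => H.
under eq_bigr do rewrite !mxE.
under [X in _ + X]eq_bigr do rewrite !mxE.
under eq_bigr do rewrite mulr1.
under [X in _ + X]eq_bigr do rewrite mulrN1.
rewrite sumrB sumr_const card_ord sumrN; lra.
Qed.

Lemma sumPosz (I : finType) (F : I -> nat) : \sum_i (F i)%:Z = (\sum_i F i)%N%:Z.
Proof. by elim/big_rec2: _ => // i x y _ ->; rewrite PoszD. Qed.

Theorem lemma4p33 (a1 a2 b1 b2 m1 m2 n1 n2 : nat) :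
  (0 < a1)%N -> (0 < a2)%N -> (0 < b1)%N -> (0 < b2)%N ->
  (0 < m1)%N -> (0 < m2)%N -> (0 < n1)%N -> (0 < n2)%N ->
  (a1 + a2 < m1 + m2)%N -> (b1 + b2 < n1 + n2)%N ->
  (m1%:Z - m2%:Z = a1%:Z - a2%:Z) -> (n1%:Z - n2%:Z = b1%:Z - b2%:Z) ->
  ((n1 + n2)%:Q / (m1 + m2)%:Q = (b1 + b2)%:Q / (a1 + a2)%:Q) ->
  exists Y : 'M[int]_(m1 + m2, n1 + n2),
    zero_one_mx Y /\
    Y *m signed_ones n1 n2 1 1 = signed_ones m1 m2 b1%:Z b2%:Z /\
    Y^T *m signed_ones m1 m2 1 1 = signed_ones n1 n2 a1%:Z a2%:Z.
Proof.
move=> a10 a20 b10 b20 m10 m20 n10 n20 HM HN Em En Eq.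
have Er : (b1 + n2 = b2 + n1)%N by lia.
have Ec : (a1 + m2 = a2 + m1)%N by lia.
have Eq' : ((n1 + n2) * (a1 + a2) = (b1 + b2) * (m1 + m2))%N.
  move/eqP: Eq; rewrite eqr_div; last 2 first.
  - by rewrite intr_eq0; apply/eqP; lia.
  - by rewrite intr_eq0; apply/eqP; lia.
  by rewrite -!intrM eqr_int -!PoszM => /eqP [].
set r := (b1 + n2)%N; set c := (a1 + m2)%N.
have EMN : ((m1 + m2) * r = c * (n1 + n2))%N by rewrite /r /c; nia.
have rN : (r <= n1 + n2)%N by rewrite /r; lia.
have N0 : (0 < n1 + n2)%N by lia.
pose Z : 'M[int]_(m1 + m2, n1 + n2) := \matrix_(i, j) (zf r (n1 + n2) i j)%:Z.
have Z01 : zero_one_mx Z.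
  move=> i j; rewrite mxE; have := zf_le1 i j rN.
  by case: (zf _ _ _ _) => [|[|]] //= _; [left|right].
exists (flipmx Z); split; first exact: flip01.
split.
  apply: (flip_row (r := r%:Z)).
  - by move=> i; under eq_bigr do rewrite mxE; rewrite sumPosz zf_row.
  - by rewrite /r ?natz; lia.
  - by rewrite /r ?natz; lia.
rewrite flip_tr; apply: (flip_row (r := c%:Z)).
- move=> j; under eq_bigr do rewrite !mxE; rewrite sumPosz (zf_col (M := m1 + m2) (c := c) (ltn_ord j) EMN) //.
- by rewrite /c ?natz; lia.
- by rewrite /c ?natz; lia.
Qed.
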